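(* Assume that $d_k < \sqrt2\,(p_k)^{1/2}$ for every integer $k\geq1$ with $k\neq 4$. Let $f(n) := n(n+1)/2$. Then for every integer $n\geq 1$, $$\pi(n^3) < \pi(n^3 + f(n)) < \pi(n^3 + 2f(n)) < \pi(n^3 + 4f(n)) < \pi(n^3 + 6f(n)).$$ In particular there are at least four primes between $n^3$ and $(n+1)^3$.
   Context: $p_k$ denotes the $k$th prime ($p_1=2$), $d_k := p_{k+1}-p_k$, and $\pi(x)$ is the number of primes $p\le x$. *)

(* Defs.v *)
From Stdlib Require Import Reals.
From mathcomp Require Import all_boot.

Lemma next_prime_ex (m : nat) : exists p, (m < p) && prime p.
Proof. by case: (prime_above m) => p H1 H2; exists p; rewrite H1 H2. Qed.

Definition next_prime (m : nat) : nat := ex_minn (next_prime_ex m).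

(* primes0 k = the (k+1)-th prime (0-based enumeration: primes0 0 = 2) *)
Fixpoint primes0 (k : nat) : nat :=
  match k with
  | 0 => 2
  | k'.+1 => next_prime (primes0 k')
  end.

(* p_ k = k-th prime, 1-indexed (p_ 1 = 2); p_ 0 is an unused junk value *)
Definition p_ (k : nat) : nat := primes0 k.-1.

Definition d_ (k : nat) : nat := p_ k.+1 - p_ k.

Definition primepi (x : nat) : nat := count prime (iota 0 x.+1).

Definition f_tri (n : nat) : nat := (n * n.+1) %/ 2.

(* Main.v *)
Require Import Defs.
From Stdlib Require Import Reals Lra.
From mathcomp Require Import all_boot zify.
Set Implicit Arguments.
Unset Strict Implicit.

Lemma np_gt m : m < next_prime m.
Proof. rewrite /next_prime; case: ex_minnP => p /andP [] //. Qed.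
Lemma np_prime m : prime (next_prime m).
Proof. rewrite /next_prime; case: ex_minnP => p /andP [] //. Qed.
Lemma np_min m p : m < p -> prime p -> next_prime m <= p.
Proof. move=> h1 h2; rewrite /next_prime; case: ex_minnP => q _ H; apply: H; by rewrite h1 h2. Qed.
Lemma np_mono m a : m <= a -> next_prime m <= next_prime a.
Proof. move=> h; apply: np_min; last exact: np_prime. have := np_gt a; lia. Qed.

Lemma primes0_ge k : k.+2 <= primes0 k.
Proof. elim: k => [//|k IH] /=. have := np_gt (primes0 k); lia. Qed.

Lemma primes0_4 : primes0 4 <= 11.
Proof.
have h1 : primes0 1 <= 3 by apply: np_min.
have h2 : primes0 2 <= 5 by change (next_prime (primes0 1) <= 5); exact: (leq_trans (np_mono h1) (@np_min 3 5 isT isT)).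
have h3 : primes0 3 <= 7 by change (next_prime (primes0 2) <= 7); exact: (leq_trans (np_mono h2) (@np_min 5 7 isT isT)).
by change (next_prime (primes0 3) <= 11); exact: (leq_trans (np_mono h3) (@np_min 7 11 isT isT)).
Qed.

Lemma find_k x : 2 <= x -> exists j, primes0 j <= x < primes0 j.+1.
Proof.
move=> hx.
suff H : forall m, x < primes0 m -> exists j, primes0 j <= x < primes0 j.+1.
  apply: (H x); have := primes0_ge x; lia.
elim=> [/=|m IH h]; first lia.
case: (leqP (primes0 m) x) => hm; first by exists m; rewrite hm h.
exact: IH.
Qed.

Lemma primepi_split x y : x <= y ->
  primepi y = primepi x + count prime (iota x.+1 (y - x)).
Proof.
move=> h; rewrite /primepi -count_cat -[in RHS](add0n x.+1) -iotaD.
congr (count _ (iota _ _)); lia.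
Qed.

Lemma primepi_mono x y : x <= y -> primepi x <= primepi y.
Proof. move=> h; rewrite (primepi_split h); exact: leq_addr. Qed.

Lemma primepi_lt x y p : x < p -> p <= y -> prime p -> primepi x < primepi y.
Proof.
move=> h1 h2 hp; rewrite (primepi_split (_ : x <= y)); last lia.
rewrite -[X in X < _]addn0 ltn_add2l -has_count.
apply/hasP; exists p => //; rewrite mem_iota; lia.
Qed.

Definition Hyp := forall k : nat, 1 <= k -> k <> 4 ->
     Rlt (INR (d_ k)) (Rmult (sqrt (IZR 2%Z)) (sqrt (INR (p_ k)))).

Lemma hyp_nat (H : Hyp) k : 1 <= k -> k <> 4 -> d_ k * d_ k < 2 * p_ k.
Proof.
move=> h1 h2; have := H k h1 h2 => Hr.
have h0 : Rle 0 (INR (d_ k)) by apply: pos_INR.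
set s := Rmult (sqrt (IZR 2)) (sqrt (INR (p_ k))) in Hr *.
have hs : Rle 0 s.
  apply: Rmult_le_pos; apply: sqrt_pos.
have : Rlt (Rmult (INR (d_ k)) (INR (d_ k))) (Rmult s s).
  by apply: Rmult_le_0_lt_compat.
have e : Rmult s s = Rmult (IZR 2) (INR (p_ k)).
  have a := sqrt_sqrt (IZR 2) ltac:(lra).
  have b := sqrt_sqrt (INR (p_ k)) (pos_INR _).
  rewrite /s; transitivity (Rmult (Rmult (sqrt (IZR 2)) (sqrt (IZR 2))) (Rmult (sqrt (INR (p_ k))) (sqrt (INR (p_ k))))); first ring.
  by rewrite a b.
rewrite e -mult_INR (_ : IZR 2 = INR 2) // -mult_INR => /INR_lt /ltP //.
Qed.

Lemma gap (H : Hyp) x L : 11 <= x -> 2 * x <= L * L -> primepi x < primepi (x + L).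
Proof.
move=> hx hL; have hx2 : 2 <= x by lia.
have [j /andP [hj1 hj2]] := find_k hx2.
have hj : j <> 3.
  move=> e; subst j; have := primes0_4; lia.
have := hyp_nat H (k := j.+1) (ltac:(lia)) (ltac:(lia)).
rewrite /d_ /p_ /= => hd.
apply: (primepi_lt hj2); last exact: np_prime.
have hq := np_gt (primes0 j).
simpl in hj2.
set q := primes0 j in hj1 hd hq hj2 *.
set r := next_prime q in hd hq hj2 *.
move: hd; set d := r - q => hd.
have : d < L.
  rewrite ltnNge; apply/negP => hLd.
  have := leq_mul hLd hLd; lia.
rewrite /d => hdL; change (r <= x + L); lia.
Qed.

Lemma ftri2 n : f_tri n * 2 = n * n.+1.
Proof.
rewrite /f_tri divnK // dvdn2 oddM /=; by case: (odd n).
Qed.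

Unset Implicit Arguments.
Theorem theorem8p1 :
  (forall k : nat, 1 <= k -> k <> 4 ->
     Rlt (INR (d_ k)) (Rmult (sqrt (IZR 2%Z)) (sqrt (INR (p_ k))))) ->
  forall n : nat, 1 <= n ->
    [/\ primepi (n ^ 3) < primepi (n ^ 3 + f_tri n),
        primepi (n ^ 3 + f_tri n) < primepi (n ^ 3 + 2 * f_tri n),
        primepi (n ^ 3 + 2 * f_tri n) < primepi (n ^ 3 + 4 * f_tri n),
        primepi (n ^ 3 + 4 * f_tri n) < primepi (n ^ 3 + 6 * f_tri n)
      & 4 <= primepi (n.+1 ^ 3) - primepi (n ^ 3)].
Proof.
move=> H n hn.
case: (leqP n 6) => hn6.
  move: n hn hn6; by do 7?[case=> //]; move=> _ _; vm_compute; split.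
have hf := ftri2 n.
set f := f_tri n in hf *.
have e3 : n ^ 3 = n * n * n by rewrite /expn /=; lia.
rewrite e3.
have h7 : 343 <= n * n * n by nia.
have a1 : primepi (n * n * n) < primepi (n * n * n + f).
  apply: gap => //; first lia. nia.
have a2 : primepi (n * n * n + f) < primepi (n * n * n + 2 * f).
  rewrite (_ : n * n * n + 2 * f = n * n * n + f + f); last lia.
  apply: gap => //; first lia. nia.
have a3 : primepi (n * n * n + 2 * f) < primepi (n * n * n + 4 * f).
  rewrite (_ : n * n * n + 4 * f = n * n * n + 2 * f + 2 * f); last lia.
  apply: gap => //; first lia. nia.
have a4 : primepi (n * n * n + 4 * f) < primepi (n * n * n + 6 * f).
  rewrite (_ : n * n * n + 6 * f = n * n * n + 4 * f + 2 * f); last lia.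
  apply: gap => //; first lia. nia.
split => //.
have a5 : primepi (n * n * n + 6 * f) <= primepi (n.+1 ^ 3).
  apply: primepi_mono; rewrite /expn /=; nia.
lia.
Qed.
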